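(* Let $R$ be a local ring and $s\in R$ a central element with $s\in J(R)$. Then $A\in M_2(R;s)$ is strongly $J$-clean if and only if one of the following holds: (1) $A\in J\big(M_2(R;s)\big)$; (2) $I_2-A\in J\big(M_2(R;s)\big)$; (3) $A$ is similar to $\left[\begin{smallmatrix} u&1\\ v&w\end{smallmatrix}\right]$ for some $u\in 1+J(R)$, $v\in U(R)$, $w\in J(R)$ such that the equation $t^2-(vuv^{-1}+w)t+(vuv^{-1}w-s^2v)=0$ has a right root in $1+J(R)$ and the equation $t^2-(u+w)t+(wu-s^2v)=0$ has a right root in $J(R)$; (4) $A$ is similar to $\left[\begin{smallmatrix} w&1\\ v&u\end{smallmatrix}\right]$ for some $u\in 1+J(R)$, $v\in U(R)$, $w\in J(R)$ such that the equation $t^2-(u+vwv^{-1})t+(vwv^{-1}u-s^2v)=0$ has a right root in $J(R)$ and the equation $t^2-(u+w)t+(uw-s^2v)=0$ has a right root in $1+J(R)$.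
   Context: All rings are associative with identity. A ring $R$ is local if $R/J(R)$ is a division ring, where $J(R)$ is the Jacobson radical; $U(R)$ is the group of units. For $a,b\in R$, an element $r\in R$ is a right root of $t^2-at+b$ if $r^2-ar+b=0$. For a ring $R$ and a central element $s\in R$, $M_2(R;s)$ denotes the ring whose elements are the $2\times 2$ arrays $\left[\begin{smallmatrix} a&b\\ c&d\end{smallmatrix}\right]$ with $a,b,c,d\in R$, with componentwise addition and multiplication $\left[\begin{smallmatrix} a&b\\ c&d\end{smallmatrix}\right]\left[\begin{smallmatrix} a'&b'\\ c'&d'\end{smallmatrix}\right]=\left[\begin{smallmatrix} aa'+s^2bc'&ab'+bd'\\ ca'+dc'&s^2cb'+dd'\end{smallmatrix}\right]$, with identity $I_2$. Two elements $A,B\in M_2(R;s)$ are similar if $B=P^{-1}AP$ for some unit $P$ of $M_2(R;s)$. An element $a$ of a ring $T$ is strongly $J$-clean if there is an idempotent $e\in T$ with $ae=ea$ and $a-e\in J(T)$. *)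

(* Defs.v *)
From HB Require Import structures.
From mathcomp Require Import all_boot all_order all_algebra.
Set Implicit Arguments. Unset Strict Implicit. Unset Printing Implicit Defensive.
Import GRing.Theory.
Local Open Scope ring_scope.

Definition central_elt (R : nzRingType) (s : R) := forall x : R, s * x = x * s.

Record cent (R : nzRingType) := Cent { cval :> R; cvalP : central_elt cval }.

Definition csq (R : nzRingType) (s : cent R) : R := cval s * cval s.
Arguments csq : simpl never.

Lemma csqC (R : nzRingType) (s : cent R) (x : R) : x * csq s = csq s * x.
Proof. by rewrite /csq mulrA -cvalP -mulrA -cvalP mulrA. Qed.

(** The ring M_2(R;s): 2x2 arrays [a b; c d] stored as ((a, b), c, d). *)
Definition M2s (R : nzRingType) (s : cent R) : Type := (R * R * R * R)%type.

Section M2sRing.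
Variables (R : nzRingType) (s : cent R).
Local Notation M := (M2s s).
HB.instance Definition _ := GRing.Zmodule.on M.

Definition mx2 (a b c d : R) : M := (a, b, c, d).
Definition e11 (A : M) : R := A.1.1.1.
Definition e12 (A : M) : R := A.1.1.2.
Definition e21 (A : M) : R := A.1.2.
Definition e22 (A : M) : R := A.2.

Definition m2mul (A B : M) : M :=
  mx2 (e11 A * e11 B + csq s * (e12 A * e21 B))
      (e11 A * e12 B + e12 A * e22 B)
      (e21 A * e11 B + e22 A * e21 B)
      (csq s * (e21 A * e12 B) + e22 A * e22 B).

Definition m2one : M := mx2 1 0 0 1.

Lemma m2mulA : associative m2mul.
Proof.
move=> [[[a b] c] d] [[[a' b'] c'] d'] [[[a'' b''] c''] d''].
rewrite /m2mul /mx2 /e11 /e12 /e21 /e22 /=.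
congr (_, _, _, _);
  rewrite !(mulrDl, mulrDr, mulrA, csqC, addrA);
  congr (_ + _); rewrite -!addrA; congr (_ + _); exact: addrC.
Qed.

Lemma m2mul1 : left_id m2one m2mul.
Proof.
move=> [[[a b] c] d]; rewrite /m2mul /m2one /mx2 /e11 /e12 /e21 /e22 /=.
by rewrite !(mul1r, mul0r, mulr0, addr0, add0r).
Qed.

Lemma m2mulr1 : right_id m2one m2mul.
Proof.
move=> [[[a b] c] d]; rewrite /m2mul /m2one /mx2 /e11 /e12 /e21 /e22 /=.
by rewrite !(mulr1, mul0r, mulr0, addr0, add0r).
Qed.

Lemma m2mulDl : left_distributive m2mul +%R.
Proof.
move=> [[[a b] c] d] [[[a' b'] c'] d'] [[[a'' b''] c''] d''].
rewrite /m2mul /mx2 /e11 /e12 /e21 /e22 /=.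
congr (_, _, _, _); rewrite !(mulrDl, mulrDr); by rewrite addrACA.
Qed.

Lemma m2mulDr : right_distributive m2mul +%R.
Proof.
move=> [[[a b] c] d] [[[a' b'] c'] d'] [[[a'' b''] c''] d''].
rewrite /m2mul /mx2 /e11 /e12 /e21 /e22 /=.
congr (_, _, _, _); rewrite !(mulrDl, mulrDr); by rewrite addrACA.
Qed.

Lemma m2one_neq0 : m2one != 0.
Proof. by apply/eqP => /(congr1 (fun A : M => A.2)) /= /eqP; rewrite oner_eq0. Qed.

HB.instance Definition _ := GRing.Zmodule_isNzRing.Build M
  m2mulA m2mul1 m2mulr1 m2mulDl m2mulDr m2one_neq0.
End M2sRing.

Section RingNotions.
Variable T : nzRingType.

Definition left_ideal (I : T -> Prop) : Prop :=
  I 0 /\ (forall x y, I x -> I y -> I (x - y)) /\ (forall r x, I x -> I (r * x)).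

Definition maximal_left_ideal (I : T -> Prop) : Prop :=
  left_ideal I /\ ~ I 1 /\
  (forall K : T -> Prop, left_ideal K -> ~ K 1 -> (forall x, I x -> K x) ->
     forall x, K x -> I x).

Definition jacobson (x : T) : Prop :=
  forall I : T -> Prop, maximal_left_ideal I -> I x.

Definition is_unit (x : T) : Prop := exists y, x * y = 1 /\ y * x = 1.

(* R/J(R) is a division ring: it is nonzero and every nonzero class is
   (two-sided) invertible modulo J(R). *)
Definition local_ring : Prop :=
  ~ jacobson 1 /\
  forall x, ~ jacobson x -> exists y, jacobson (x * y - 1) /\ jacobson (y * x - 1).

Definition right_root (a b r : T) : Prop := r ^+ 2 - a * r + b = 0.

Definition similar_elt (A B : T) : Prop :=
  exists P Q : T, P * Q = 1 /\ Q * P = 1 /\ B = Q * A * P.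

Definition strongly_J_clean (a : T) : Prop :=
  exists e : T, e * e = e /\ a * e = e * a /\ jacobson (a - e).

End RingNotions.

(* Main.v *)
Require Import Defs.
From HB Require Import structures.
From mathcomp Require Import all_boot all_order all_algebra.
Import GRing.Theory.
Local Open Scope ring_scope.
Set Implicit Arguments. Unset Strict Implicit.

Section ZRefl.
Variable V : zmodType.
Inductive zex := ZAt of nat | ZAdd of zex & zex | ZOpp of zex | Z0.
Fixpoint zeval (env : seq V) e : V := match e with
  | ZAt n => nth 0 env n | ZAdd a b => zeval env a + zeval env b
  | ZOpp a => - zeval env a | Z0 => 0 end.
Fixpoint zcoef e (n : nat) : int := match e with
  | ZAt m => (m == n)%:Z | ZAdd a b => zcoef a n + zcoef b n
  | ZOpp a => - zcoef a n | Z0 => 0 end.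
Lemma zeval_coef env e :
  zeval env e = \sum_(i < size env) (nth 0 env i) *~ zcoef e i.
Proof.
elim: e => [m|a IHa b IHb|a IHa|] /=.
- case: (ltnP m (size env)) => hm.
  + rewrite (bigD1 (Ordinal hm)) //= eqxx mulr1z big1 ?addr0 // => i /eqP ne.
    have -> : (m == i) = false by apply/negP=> /eqP e; apply: ne; apply: val_inj.
    by rewrite mulr0z.
  + rewrite nth_default // big1 // => i _.
    have -> : (m == i) = false.
      by apply/negP=> /eqP e; move: (ltn_ord i); rewrite -e ltnNge hm.
    by rewrite mulr0z.
- by rewrite IHa IHb -big_split /=; apply: eq_bigr => i _; rewrite mulrzDr.
- by rewrite IHa -sumrN; apply: eq_bigr => i _; rewrite mulrNz.
- by rewrite big1 // => i _; rewrite mulr0z.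
Qed.
Lemma zeval_eq env e1 e2 :
  all (fun n => zcoef e1 n == zcoef e2 n) (iota 0 (size env)) ->
  zeval env e1 = zeval env e2.
Proof.
move=> /allP H; rewrite !zeval_coef; apply: eq_bigr => i _.
have := H i; rewrite mem_iota /= add0n ltn_ord => /(_ isT) /eqP -> //.
Qed.
End ZRefl.

Ltac zconv x t := match goal with
  | _ => let _ := constr:(ltac:(unify x t; exact I) : True) in constr:(true)
  | _ => constr:(false) end.
Ltac zmem t l := lazymatch l with
  | ?x :: ?l' => let b := zconv x t in
      lazymatch b with true => constr:(true) | false => zmem t l' end
  | _ => constr:(false) end.
Ltac zatoms acc t := match t with
  | (?a + ?b)%R => let acc1 := zatoms acc a in zatoms acc1 b
  | (- ?a)%R => zatoms acc a
  | 0%R => acc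
  | _ => let b := zmem t acc in
         lazymatch b with true => acc | false => constr:(t :: acc) end end.
Ltac zidx t l := lazymatch l with
  | ?x :: ?l' => let b := zconv x t in
      lazymatch b with true => constr:(0%nat) | false => let n := zidx t l' in constr:(S n) end end.
Ltac zq l t := match t with
  | (?a + ?b)%R => let x := zq l a in let y := zq l b in constr:(ZAdd x y)
  | (- ?a)%R => let x := zq l a in constr:(ZOpp x)
  | 0%R => constr:(Z0)
  | _ => let n := zidx t l in constr:(ZAt n) end.
Ltac zmod := match goal with |- @eq ?V ?L ?R =>
  let l0 := zatoms (@nil V) L in let l := zatoms l0 R in
  let eL := zq l L in let eR := zq l R in
  change (@zeval V l eL = @zeval V l eR); apply: zeval_eq; vm_compute; reflexivity end.

Ltac expand := rewrite ?(mulrDl, mulrDr, mulrBl, mulrBr, mulNr, mulrN, opprK,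
   opprD, mul1r, mulr1, mul0r, mulr0, mulrA, addr0, add0r, oppr0).


From Stdlib Require Import Classical.
From mathcomp Require Import classical_sets.

Section Generic.
Variable T : nzRingType.
Implicit Types x y z r A B C : T.
Local Notation J := (@jacobson T).

Lemma jac0 : J 0. Proof. by move=> I [[I0 _] _]. Qed.
Lemma jacB x y : J x -> J y -> J (x - y).
Proof. by move=> hx hy I hI; case: (hI) => [[_ [IB _]] _]; apply: IB; [apply: hx|apply: hy]. Qed.
Lemma jacMl r x : J x -> J (r * x).
Proof. by move=> hx I hI; case: (hI) => [[_ [_ IM]] _]; apply: IM; apply: hx. Qed.
Lemma jacN x : J x -> J (- x).
Proof. by move=> hx; rewrite -sub0r; apply: jacB => //; apply: jac0. Qed.
Lemma jacD x y : J x -> J y -> J (x + y).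
Proof. by move=> hx hy; rewrite -[y]opprK; apply: jacB => //; apply: jacN. Qed.
Lemma jacE x y : x = y -> J x -> J y. Proof. by move=> ->. Qed.

Lemma jac_crit x : (forall r, exists y, y * (1 - r * x) = 1) -> J x.
Proof.
move=> H I [[I0 [IB IM]] [I1 Imax]]; apply: NNPP => nIx.
pose K := fun z => exists i r, I i /\ z = i + r * x.
have Kid : left_ideal K.
  split; first by exists 0, 0; rewrite mul0r addr0.
  split.
  - move=> a b [i [r [Ii ->]]] [i' [r' [Ii' ->]]]; exists (i - i'), (r - r').
    split; first exact: IB. rewrite mulrBl; zmod.
  - move=> c a [i [r [Ii ->]]]; exists (c * i), (c * r); split; first exact: IM.
    by rewrite mulrDr mulrA.
have IK : forall z, I z -> K z by move=> z Iz; exists z, 0; rewrite mul0r addr0.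
case: (classic (K 1)) => [[i [r [Ii e]]]|nK1].
  have [y hy] := H r; apply: I1; rewrite -hy; apply: IM.
  by have -> : 1 - r * x = i by rewrite e; zmod.
apply: nIx; apply: (Imax K Kid nK1 IK); exists 0, 1; split => //; rewrite mul1r; zmod.
Qed.

Lemma jac_linv x : J x -> exists y, y * (1 - x) = 1.
Proof.
move=> Jx; apply: NNPP => nl.
pose L := fun z => exists r, z = r * (1 - x).
have Lid : left_ideal L.
  split; first by exists 0; rewrite mul0r.
  split; first by move=> a b [r ->] [r' ->]; exists (r - r'); rewrite mulrBl.
  by move=> c a [r ->]; exists (c * r); rewrite mulrA.
have nL1 : ~ L 1 by move=> [r e]; apply: nl; exists r.
pose P := fun A : set T => (forall z, ~ A z) \/ (left_ideal A /\ ~ A 1 /\ forall z, L z -> A z).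
have [A [PA Amax]] : exists A : set T, P A /\ forall B : set T, (A `<` B)%classic -> ~ P B.
  apply: Zorn_bigcup => F FP Ftot.
  case: (classic (exists X, F X /\ exists z, X z)) => [[X0 [FX0 [z0 Xz0]]]|nne]; last first.
    by left => z [X FX Xz]; apply: nne; exists X; split => //; exists z.
  have ideal_of : forall Y, F Y -> (exists z, Y z) -> left_ideal Y /\ ~ Y 1 /\ forall z, L z -> Y z.
    move=> Y FY [w Yw]; case: (FP Y FY) => // /(_ w); done.
  have [[X00 [XB XM]] [nX1 LX]] := ideal_of X0 FX0 (ex_intro _ z0 Xz0).
  right; split; [split; [|split] | split].
  - by exists X0.
  - move=> a b [X1 FX1 Xa] [X2 FX2 Xb].
    case: (Ftot X1 X2 FX1 FX2) => sub.
    + have [[_ [B2 _]] _] := ideal_of X2 FX2 (ex_intro _ b Xb).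
      by exists X2 => //; apply: B2 => //; apply: sub.
    + have [[_ [B1 _]] _] := ideal_of X1 FX1 (ex_intro _ a Xa).
      by exists X1 => //; apply: B1 => //; apply: sub.
  - move=> c a [X1 FX1 Xa]; have [[_ [_ M1]] _] := ideal_of X1 FX1 (ex_intro _ a Xa).
    by exists X1 => //; apply: M1.
  - move=> [X1 FX1 X11]; have [_ [n1 _]] := ideal_of X1 FX1 (ex_intro _ 1 X11); exact: n1 X11.
  - by move=> z Lz; exists X0 => //; apply: LX.
have PL : P L by right.
case: PA => [Aempty | [Aid [nA1 LA]]].
  apply: (Amax L) => //; split; first by move=> z /Aempty.
  by move=> /(_ 0) H; apply: (Aempty 0); apply: H; exists 0; rewrite mul0r.
have Amaxl : maximal_left_ideal A.
  split => //; split => // K Kid nK1 AK z Kz; apply: NNPP => nAz.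
  apply: (Amax K); first by split => // H; apply: nAz; apply: H.
  by right; split => //; split => // w Lw; apply: AK; apply: LA.
have Ax := Jx A Amaxl.
have A1x : A (1 - x) by apply: LA; exists 1; rewrite mul1r.
case: Aid => A0 [AB _]; apply: nA1.
have -> : (1 : T) = (1 - x) - (0 - x) by zmod.
by apply: (AB) => //; apply: (AB).
Qed.

Lemma jac_unit x : J x -> is_unit (1 - x).
Proof.
move=> Jx; have [y hy] := jac_linv Jx.
have ey : y = 1 - - (y * x) by rewrite -{1}hy; expand; zmod.
have [z hz] := jac_linv (jacN (jacMl y Jx)); rewrite -ey in hz.
have ez : z = 1 - x.
  have : z * (y * (1 - x)) = (z * y) * (1 - x) by rewrite mulrA.
  by rewrite hy hz mulr1 mul1r.
by exists y; split => //; rewrite -ez.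
Qed.

Lemma jacMr x r : J x -> J (x * r).
Proof.
move=> Jx; apply: jac_crit => r'.
have [c [h1 h2]] := jac_unit (jacMl (r * r') Jx).
exists (1 + r' * x * c * r).
have hc : c * (r * r' * x) = c - 1 by move: h2; expand => h2; rewrite -[in RHS]h2; zmod.
have h : r' * x * (c * (r * r' * x)) * r = r' * x * c * r - r' * x * r by rewrite hc; expand.
move: h; expand => h; rewrite h; zmod.
Qed.

Lemma sim_sym A B : similar_elt A B -> similar_elt B A.
Proof.
move=> [P [Q [h1 [h2 ->]]]]; exists Q, P; split => //; split => //.
by rewrite !mulrA h1 mul1r -mulrA h1 mulr1.
Qed.

Lemma sim_trans A B C : similar_elt A B -> similar_elt B C -> similar_elt A C.
Proof.
move=> [P [Q [h1 [h2 ->]]]] [P' [Q' [h1' [h2' ->]]]]; exists (P * P'), (Q' * Q).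
split; first by rewrite -mulrA (mulrA P') h1' mul1r.
split; first by rewrite -mulrA (mulrA Q) h2 mul1r.
by rewrite !mulrA.
Qed.

Lemma conj_mul (P Q X Y : T) : Q * P = 1 -> (P * X * Q) * (P * Y * Q) = P * (X * Y) * Q.
Proof. by move=> h; rewrite !mulrA -(mulrA (P * X) Q P) h mulr1. Qed.

Lemma sJc_sim A B : similar_elt A B -> strongly_J_clean B -> strongly_J_clean A.
Proof.
move=> [P [Q [h1 [h2 ->]]]] [e [he [hc hj]]].
have eA : A = P * (Q * A * P) * Q by rewrite !mulrA h1 mul1r -mulrA h1 mulr1.
exists (P * e * Q); split; last split.
- by rewrite conj_mul // he.
- by rewrite {1 2}eA !conj_mul // hc.
- have -> : A - P * e * Q = P * (Q * A * P - e) * Q by rewrite {1}eA; expand.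
  by apply: jacMr; apply: jacMl.
Qed.

Lemma diagonalize (E e A : T) : E * E = E -> e * e = e -> A * e = e * A ->
  J (A - e) -> J (e - E) ->
  exists P Q, [/\ P * Q = 1, Q * P = 1, E * (P * A * Q) = (P * A * Q) * E
                & J (P * A * Q - E)].
Proof.
move=> hE he hc hA heE.
have hE' z : z * E * E = z * E by rewrite -mulrA hE.
have he' z : z * e * e = z * e by rewrite -mulrA he.
pose P := E * e + (1 - E) * (1 - e).
have JP : J (1 - P).
  have -> : 1 - P = - (E * (e - E) + (E - 1) * (e - E)).
    rewrite /P; expand; rewrite ?hE' ?he' ?hE ?he; zmod.
  by apply: jacN; apply: jacD; apply: jacMl.
have hPe : P * e = E * P by rewrite /P; expand; rewrite ?hE' ?he' ?hE ?he; zmod.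
clearbody P.
have [Q [h1 h2]] := jac_unit JP; rewrite (_ : 1 - (1 - P) = P) in h1 h2; last by zmod.
have hQE : Q * E = e * Q.
  by rewrite -[Q * E]mulr1 -h1 !mulrA -(mulrA Q E) -hPe !mulrA h2 mul1r.
have EPQ : E = P * e * Q by rewrite -mulrA -hQE mulrA h1 mul1r.
exists P, Q; split => //.
- by rewrite !mulrA -hPe -!mulrA hQE (mulrA e) -hc !mulrA.
- rewrite EPQ (_ : P * A * Q - P * e * Q = P * (A - e) * Q); last by expand.
  by apply: jacMr; apply: jacMl.
Qed.

End Generic.

Section Local.
Variable R : nzRingType.
Hypothesis Hloc : local_ring R.
Local Notation J := (@jacobson R).
Implicit Types x y : R.

Lemma jac1 : ~ J 1. Proof. by case: Hloc. Qed.

Lemma unit_of_lr x l r : l * x = 1 -> x * r = 1 -> is_unit x.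
Proof.
move=> hl hr; have e : l = r by rewrite -[l]mulr1 -hr mulrA hl mul1r.
by exists r; split => //; rewrite -e.
Qed.

Lemma nonjac_unit x : ~ J x -> is_unit x.
Proof.
case: Hloc => _ H nx; have [y [h1 h2]] := H x nx.
have [a [ha1 ha2]] := jac_unit (jacN h1); rewrite (_ : 1 - - (x * y - 1) = x * y) in ha1 ha2; last by zmod.
have [b [hb1 hb2]] := jac_unit (jacN h2); rewrite (_ : 1 - - (y * x - 1) = y * x) in hb1 hb2; last by zmod.
by apply: (@unit_of_lr x (b * y) (y * a)); [rewrite -mulrA | rewrite mulrA].
Qed.

Lemma unit_nonjac x : is_unit x -> ~ J x.
Proof. by move=> [y [_ h]] Jx; apply: jac1; rewrite -h; apply: jacMl. Qed.

Lemma idem_cases x : J (x * x - x) -> J x \/ J (x - 1).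
Proof.
move=> h; case: (classic (J x)) => [|nx]; [by left|right].
have [y [h1 h2]] := nonjac_unit nx.
by apply: (jacE _ (jacMl y h)); rewrite mulrBr mulrA h2 mul1r.
Qed.

Lemma unitM x y : is_unit x -> is_unit y -> is_unit (x * y).
Proof.
move=> [x' [hx1 hx2]] [y' [hy1 hy2]]; exists (y' * x'); split.
- by rewrite mulrA -(mulrA x) hy1 mulr1.
- by rewrite mulrA -(mulrA y') hx2 mulr1.
Qed.
Lemma unitN x : is_unit x -> is_unit (- x).
Proof. by move=> [x' [h1 h2]]; exists (- x'); rewrite mulrNN mulrNN. Qed.
Lemma unit1J x : J (x - 1) -> is_unit x.
Proof. by move=> h; apply: nonjac_unit => Jx; apply: jac1; apply: (jacE _ (jacB Jx h)); zmod. Qed.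

Definition cg x y := J (x - y).
Lemma cg_refl x : cg x x. Proof. by rewrite /cg subrr; apply: jac0. Qed.
Lemma cgE x y : x = y -> cg x y. Proof. by move=> ->; apply: cg_refl. Qed.
Lemma cg_sym x y : cg x y -> cg y x.
Proof. by move=> h; apply: (jacE _ (jacN h)); zmod. Qed.
Lemma cg_trans x y z : cg x y -> cg y z -> cg x z.
Proof. by move=> h1 h2; apply: (jacE _ (jacD h1 h2)); zmod. Qed.
Lemma cgD x y x' y' : cg x x' -> cg y y' -> cg (x + y) (x' + y').
Proof. by move=> h1 h2; apply: (jacE _ (jacD h1 h2)); zmod. Qed.
Lemma cgN x x' : cg x x' -> cg (- x) (- x').
Proof. by move=> h1; apply: (jacE _ (jacN h1)); zmod. Qed.
Lemma cgB x y x' y' : cg x x' -> cg y y' -> cg (x - y) (x' - y').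
Proof. by move=> h1 h2; apply: cgD => //; apply: cgN. Qed.
Lemma cgM x y x' y' : cg x x' -> cg y y' -> cg (x * y) (x' * y').
Proof.
move=> h1 h2; apply: (jacE _ (jacD (jacMl x h2) (jacMr y' h1))); expand; zmod.
Qed.
Lemma cg0 x : cg x 0 <-> J x. Proof. by rewrite /cg subr0. Qed.

End Local.

Section M2.
Variable R : nzRingType.
Variable s : cent R.
Hypothesis Hloc : local_ring R.
Hypothesis HsJ : jacobson (cval s).
Local Notation J := (@jacobson R).
Local Notation M := (M2s s).
Local Notation S2 := (csq s).

Lemma mulM (a b c d a' b' c' d' : R) :
  (mx2 s a b c d : M) * mx2 s a' b' c' d' =
  mx2 s (a * a' + S2 * (b * c')) (a * b' + b * d') (c * a' + d * c') (S2 * (c * b') + d * d').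
Proof. by []. Qed.
Lemma addM (a b c d a' b' c' d' : R) :
  (mx2 s a b c d : M) + mx2 s a' b' c' d' = mx2 s (a + a') (b + b') (c + c') (d + d').
Proof. by []. Qed.
Lemma oppM (a b c d : R) : - (mx2 s a b c d : M) = mx2 s (- a) (- b) (- c) (- d).
Proof. by []. Qed.
Lemma subM (a b c d a' b' c' d' : R) :
  (mx2 s a b c d : M) - mx2 s a' b' c' d' = mx2 s (a - a') (b - b') (c - c') (d - d').
Proof. by []. Qed.
Lemma oneM : (1 : M) = mx2 s 1 0 0 1. Proof. by []. Qed.
Lemma zeroM : (0 : M) = mx2 s 0 0 0 0. Proof. by []. Qed.
Lemma etaM (A : M) : A = mx2 s (e11 A) (e12 A) (e21 A) (e22 A).
Proof. by case: A => [[[a b] c] d]. Qed.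
Lemma mx2_inj (a b c d a' b' c' d' : R) :
  mx2 s a b c d = mx2 s a' b' c' d' -> [/\ a = a', b = b', c = c' & d = d'].
Proof. by rewrite /mx2 => [[-> -> -> ->]]. Qed.
Lemma e11M (a b c d : R) : e11 (mx2 s a b c d) = a. Proof. by []. Qed.
Lemma e22M (a b c d : R) : e22 (mx2 s a b c d) = d. Proof. by []. Qed.

Lemma JS2 : J S2. Proof. by rewrite /csq; apply: jacMl. Qed.
Lemma S2C (x : R) : S2 * x = x * S2. Proof. by rewrite csqC. Qed.
Lemma S2E : S2 = cval s ^+ 2. Proof. by rewrite /csq expr2. Qed.


Ltac msimp := rewrite ?(mul0r, mulr0, add0r, addr0, mul1r, mulr1, subr0, sub0r, oppr0).

Lemma linvM (p q r t : R) : is_unit p -> is_unit t ->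
  exists L : M, L * mx2 s p q r t = 1.
Proof.
move=> [p' [hp1 hp2]] [t' [ht1 ht2]].
set C := mx2 s p q r t.
pose Sx := fun z : M => exists m : M, z = m * C.
have SM m z : Sx z -> Sx (m * z) by move=> [m' ->]; exists (m * m'); rewrite mulrA.
have SB z z' : Sx z -> Sx z' -> Sx (z - z') by move=> [m ->] [m' ->]; exists (m - m'); rewrite mulrBl.
have SD z z' : Sx z -> Sx z' -> Sx (z + z') by move=> [m ->] [m' ->]; exists (m + m'); rewrite mulrDl.
have SC : Sx C by exists 1; rewrite mul1r.
set x := p' * q; set y := t' * r.
have SX : Sx (mx2 s 1 x 0 0).
  have := SM (mx2 s p' 0 0 0) _ SC; rewrite /C mulM; msimp; by rewrite hp2.
have SY : Sx (mx2 s 0 0 y 1).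
  have := SM (mx2 s 0 0 0 t') _ SC; rewrite /C mulM; msimp; by rewrite ht2.
have [k1 [hk1 hk1']] := jac_unit (jacMl x (jacMr y JS2)).
have [k2 [hk2 hk2']] := jac_unit (jacMl y (jacMr x JS2)).
have S1 : Sx (mx2 s 1 0 0 0).
  have := SM (mx2 s k1 0 0 0) _ (SB _ _ SX (SM (mx2 s 0 x 0 0) _ SY)).
  rewrite (mulM 0 x 0 0 0 0 y 1) subM mulM; msimp; rewrite subrr; msimp.
  rewrite (_ : S2 * (x * y) = x * (S2 * y)); last by rewrite [S2 * y]S2C S2C mulrA.
  by rewrite hk1'.
have S2' : Sx (mx2 s 0 0 0 1).
  have := SM (mx2 s 0 0 0 k2) _ (SB _ _ SY (SM (mx2 s 0 0 y 0) _ SX)).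
  rewrite (mulM 0 0 y 0 1 x 0 0) subM mulM; msimp; rewrite subrr; msimp.
  rewrite (_ : S2 * (y * x) = y * (S2 * x)); last by rewrite [S2 * x]S2C S2C mulrA.
  by rewrite hk2'.
have [L hL] := SD _ _ S1 S2'; exists L; rewrite -hL addM oneM; msimp; by [].
Qed.

Lemma jacM_of (A : M) : J (e11 A) -> J (e22 A) -> jacobson A.
Proof.
move=> h1 h2; apply: jac_crit => B.
rewrite (etaM A) (etaM B) mulM oneM subM.
apply: linvM; apply: nonjac_unit => // Hj; apply: (@jac1 _ Hloc).
- apply: (jacE _ (jacD Hj (jacD (jacMl (e11 B) h1) (jacMr (e12 B * e21 A) JS2)))).
  zmod.
- apply: (jacE _ (jacD Hj (jacD (jacMr (e21 B * e12 A) JS2) (jacMl (e22 B) h2)))).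
  zmod.
Qed.

Lemma I1_max : maximal_left_ideal (fun B : M => J (e11 B)).
Proof.
have JS := JS2.
split; [split; [|split]|split].
- by apply: jac0.
- by move=> x y; rewrite (etaM x) (etaM y) subM !e11M; apply: jacB.
- move=> r x; rewrite (etaM x) (etaM r) mulM !e11M => hx.
  by apply: jacD; [apply: jacMl | apply: jacMr].
- by rewrite oneM e11M; apply: (@jac1 _ Hloc).
move=> K [K0 [KB KM]] nK1 IK x Kx; apply: NNPP => nx.
have [y [hy1 hy2]] := nonjac_unit Hloc nx.
have K1 : K (mx2 s (e11 x) 0 0 0).
  have := KB _ _ Kx (IK (mx2 s 0 (e12 x) (e21 x) (e22 x)) (@jac0 R)).
  by rewrite {1}(etaM x) subM; msimp; rewrite !subrr.
have := KM (mx2 s y 0 0 0) _ K1; rewrite mulM; msimp; rewrite hy2 => KE.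
have K2 : K (mx2 s 0 0 0 1) by apply: IK; apply: jac0.
apply: nK1; have := KB _ _ KE (KB _ _ K0 K2).
by rewrite zeroM (subM 0 0 0 0) subM; msimp; rewrite ?opprK oneM.
Qed.

Lemma I2_max : maximal_left_ideal (fun B : M => J (e22 B)).
Proof.
have JS := JS2.
split; [split; [|split]|split].
- by apply: jac0.
- by move=> x y; rewrite (etaM x) (etaM y) subM !e22M; apply: jacB.
- move=> r x; rewrite (etaM x) (etaM r) mulM !e22M => hx.
  by apply: jacD; [apply: jacMr | apply: jacMl].
- by rewrite oneM e22M; apply: (@jac1 _ Hloc).
move=> K [K0 [KB KM]] nK1 IK x Kx; apply: NNPP => nx.
have [y [hy1 hy2]] := nonjac_unit Hloc nx.
have K1 : K (mx2 s 0 0 0 (e22 x)).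
  have := KB _ _ Kx (IK (mx2 s (e11 x) (e12 x) (e21 x) 0) (@jac0 R)).
  by rewrite {1}(etaM x) subM; msimp; rewrite !subrr.
have := KM (mx2 s 0 0 0 y) _ K1; rewrite mulM; msimp; rewrite hy2 => KE.
have K2 : K (mx2 s 1 0 0 0) by apply: IK; apply: jac0.
apply: nK1; have := KB _ _ KE (KB _ _ K0 K2).
by rewrite zeroM (subM 0 0 0 0) subM; msimp; rewrite ?opprK oneM.
Qed.

Lemma jacM_iff (A : M) : jacobson A <-> J (e11 A) /\ J (e22 A).
Proof.
split; last by case; apply: jacM_of.
by move=> h; split; [apply: (h _ I1_max) | apply: (h _ I2_max)].
Qed.

Lemma unitM2 (p q r t : R) : is_unit p -> is_unit t -> is_unit (mx2 s p q r t : M).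
Proof.
move=> [p' [hp1 hp2]] [t' [ht1 ht2]].
set C := mx2 s p q r t; set D := (mx2 s p' 0 0 t' : M).
have hCD : C * D = 1 - (- mx2 s 0 (q * t') (r * p') 0).
  by rewrite /C /D mulM oppM oneM subM; msimp; rewrite hp1 ht1 !opprK.
have hDC : D * C = 1 - (- mx2 s 0 (p' * q) (t' * r) 0).
  by rewrite /C /D mulM oppM oneM subM; msimp; rewrite hp2 ht2 !opprK.
have J0 u w : jacobson (- mx2 s 0 u w 0 : M).
  by apply: jacN; apply: jacM_of; apply: jac0.
have [W [hW _]] := jac_unit (J0 (q * t') (r * p')); rewrite -hCD in hW.
have [W' [_ hW']] := jac_unit (J0 (p' * q) (t' * r)); rewrite -hDC in hW'.
by apply: (@unit_of_lr _ C (W' * D) (D * W)); rewrite ?mulrA // -mulrA.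
Qed.

Lemma root1_id (x y v v' a p : R) : v' * v = 1 -> v * p + y = a ->
  a ^+ 2 - (v * x * v' + y) * a + (v * x * v' * y - cval s ^+ 2 * v)
  = v * (p * a - (x * p + S2)).
Proof.
move=> hvv hii; rewrite -S2E -hii expr2.
have hz z : z * v' * v = z by rewrite -mulrA hvv mulr1.
have hC := S2C; move: (csq s) hC => S hC.
expand; rewrite ?hz hC; zmod.
Qed.

Lemma root2_id (x y v b t : R) : x + t = b ->
  b ^+ 2 - (x + y) * b + (y * x - cval s ^+ 2 * v) = t * b - (S2 * v + y * t).
Proof. move=> <-; rewrite -S2E expr2; move: (csq s) => S; expand; zmod. Qed.

Definition rr1 (x y v v' a : R) :=
  right_root (v * x * v' + y) (v * x * v' * y - cval s ^+ 2 * v) a.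
Definition rr2 (x y v b : R) :=
  right_root (x + y) (y * x - cval s ^+ 2 * v) b.

Lemma toD (x y v v' a b : R) : v * v' = 1 -> v' * v = 1 ->
  is_unit (a - y) -> is_unit (b - x) -> rr1 x y v v' a -> rr2 x y v b ->
  similar_elt (mx2 s x 1 v y : M) (mx2 s a 0 0 b).
Proof.
move=> hv1 hv2 ua ub r1 r2.
pose p := v' * (a - y); pose t := b - x.
have hii : v * p + y = a by rewrite /p mulrA hv1 mul1r; zmod.
have hiii : x + t = b by rewrite /t; zmod.
have hi : x * p + S2 = p * a.
  move: r1; rewrite /rr1 /right_root (root1_id x hv2 hii) => h.
  have : v' * (v * (p * a - (x * p + S2))) = 0 by rewrite h mulr0.
  rewrite mulrA hv2 mul1r => /eqP; rewrite subr_eq0 => /eqP ->; done.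
have hiv : S2 * v + y * t = t * b.
  move: r2; rewrite /rr2 /right_root (root2_id y v hiii) => /eqP.
  by rewrite subr_eq0 => /eqP ->.
have uP : is_unit (mx2 s p 1 1 t : M).
  apply: unitM2 => //; apply: unitM => //; by exists v.
have [Q [hPQ hQP]] := uP.
have BP : (mx2 s x 1 v y : M) * mx2 s p 1 1 t = mx2 s p 1 1 t * mx2 s a 0 0 b.
  rewrite !mulM; msimp; rewrite hi hii hiv hiii; done.
exists (mx2 s p 1 1 t), Q; split => //; split => //.
by rewrite -mulrA BP mulrA hQP mul1r.
Qed.

Lemma fromD (a b c v' : R) : c * (a - b) = 1 -> (a - b) * c = 1 ->
  let t := b - a + S2 in let v := (t * b - a * t) * c in
  v * v' = 1 -> v' * v = 1 ->
  [/\ similar_elt (mx2 s a 0 0 b : M) (mx2 s (a - S2) 1 v (a - v)),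
      rr1 (a - S2) (a - v) v v' a & rr2 (a - S2) (a - v) v b].
Proof.
move=> hc1 hc2 t v hv1 hv2.
have hv : v * (a - b) = t * b - a * t by rewrite /v -mulrA hc1 mulr1.
clearbody v.
have ht : t = b - a + S2 by [].
clearbody t.
have hiv : S2 * v + (a - v) * t = t * b.
  have hC := S2C; move: (csq s) hC ht => S hC ht.
  have e1 : v * t = v * b - v * a + v * S by rewrite ht; expand.
  have hv' : v * a = v * b + (t * b - a * t) by rewrite -hv; expand; zmod.
  by expand; rewrite e1 hv' hC; zmod.
have hiii : a - S2 + t = b by rewrite ht; zmod.
have ut : is_unit t.
  apply: nonjac_unit => // Jt.
  have [c' [h1 h2]] : is_unit (a - b) by exists c.
  apply: (unit_nonjac Hloc (ex_intro _ c' (conj h1 h2))).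
  by apply: (jacE _ (jacB JS2 Jt)); rewrite ht; zmod.
have [Q [hPQ hQP]] := @unitM2 1 1 1 t (ex_intro _ 1 (conj (mulr1 1) (mulr1 1))) ut.
have BP : (mx2 s (a - S2) 1 v (a - v) : M) * mx2 s 1 1 1 t = mx2 s 1 1 1 t * mx2 s a 0 0 b.
  rewrite !mulM; msimp; rewrite hiv hiii; congr mx2; [zmod | zmod].
split.
- exists Q, (mx2 s 1 1 1 t); split => //; split => //.
  by rewrite -BP -mulrA hPQ mulr1.
- rewrite /rr1 /right_root (root1_id (p := 1) (a - S2) hv2); last by rewrite mulr1; zmod.
  by rewrite mul1r mulr1 (_ : a - S2 + S2 = a) ?subrr ?mulr0 //; zmod.
- by rewrite /rr2 /right_root (root2_id (a - v) v hiii) hiv subrr.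
Qed.

Lemma sJc_D1 (a b : R) : J (a - 1) -> J b -> strongly_J_clean (mx2 s a 0 0 b : M).
Proof.
move=> ha hb; exists (mx2 s 1 0 0 0); split; last split.
- by rewrite mulM; msimp.
- by rewrite !mulM; msimp.
- by apply: jacM_of; rewrite subM ?e11M ?e22M ?subr0.
Qed.

Lemma sJc_D2 (a b : R) : J a -> J (b - 1) -> strongly_J_clean (mx2 s a 0 0 b : M).
Proof.
move=> ha hb; exists (mx2 s 0 0 0 1); split; last split.
- by rewrite mulM; msimp.
- by rewrite !mulM; msimp.
- by apply: jacM_of; rewrite subM ?e11M ?e22M ?subr0.
Qed.

Lemma diag_of (A : M) (E : M) : E = mx2 s 1 0 0 0 \/ E = mx2 s 0 0 0 1 ->
  E * A = A * E -> A = mx2 s (e11 A) 0 0 (e22 A).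
Proof.
rewrite (etaM A); move: (e11 A) (e12 A) (e21 A) (e22 A) => a b c d.
case=> -> ; rewrite !mulM; msimp => /mx2_inj [_ hb hc _].
- by rewrite hb -hc.
- by rewrite hc -hb.
Qed.

Lemma main_fwd (A : M) : strongly_J_clean A ->
  [\/ jacobson A,
      jacobson (1 - A),
      (exists (u v v' w : R),
          [/\ J (u - 1) /\ (v * v' = 1 /\ v' * v = 1) /\ J w,
              similar_elt A (mx2 s u 1 v w),
              (exists t : R, J (t - 1) /\
                 right_root (v * u * v' + w) (v * u * v' * w - cval s ^+ 2 * v) t)
            & (exists t : R, J t /\
                 right_root (u + w) (w * u - cval s ^+ 2 * v) t)])
    | (exists (u v v' w : R),
          [/\ J (u - 1) /\ (v * v' = 1 /\ v' * v = 1) /\ J w,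
              similar_elt A (mx2 s w 1 v u),
              (exists t : R, J t /\
                 right_root (u + v * w * v') (v * w * v' * u - cval s ^+ 2 * v) t)
            & (exists t : R, J (t - 1) /\
                 right_root (u + w) (u * w - cval s ^+ 2 * v) t)])].
Proof.
move=> [e [he [hc hj]]].
have h11 : e11 e * e11 e + S2 * (e12 e * e21 e) = e11 e.
  by have := congr1 (fun X : M => e11 X) he; rewrite {1 2}(etaM e) mulM; apply.
have h22 : S2 * (e21 e * e12 e) + e22 e * e22 e = e22 e.
  by have := congr1 (fun X : M => e22 X) he; rewrite {1 2}(etaM e) mulM; apply.
have c11 : J (e11 e) \/ J (e11 e - 1).
  apply: (idem_cases Hloc); apply: (jacE _ (jacN (jacMr (e12 e * e21 e) JS2))).
  by rewrite -{3}h11; zmod.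
have c22 : J (e22 e) \/ J (e22 e - 1).
  apply: (idem_cases Hloc); apply: (jacE _ (jacN (jacMr (e21 e * e12 e) JS2))).
  by rewrite -{3}h22; zmod.
have diagcase : forall E : M, E * E = E -> jacobson (e - E) ->
   (E = mx2 s 1 0 0 0 \/ E = mx2 s 0 0 0 1) ->
   exists a d (P Q : M), [/\ P * Q = 1, Q * P = 1,
      P * A * Q = mx2 s a 0 0 d & jacobson (mx2 s a 0 0 d - E)].
  move=> E hE hJE hEf.
  have [P [Q [h1 h2 hcE hJ]]] := diagonalize hE he hc hj hJE.
  exists (e11 (P * A * Q)), (e22 (P * A * Q)), P, Q; split => //.
  - exact: (diag_of hEf hcE).
  - by rewrite -(diag_of hEf hcE).
case: c11 => [j11|j11]; case: c22 => [j22|j22].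
- apply: Or41; apply: (jacE _ (jacD hj (jacM_of j11 j22))); zmod.
-
  have hE : (mx2 s 0 0 0 1 : M) * mx2 s 0 0 0 1 = mx2 s 0 0 0 1 by rewrite mulM; msimp.
  have hJE : jacobson (e - mx2 s 0 0 0 1).
    by apply: jacM_of; rewrite {1}(etaM e) subM ?e11M ?e22M ?subr0.
  have [a [d [P [Q [h1 h2 hD hJ]]]]] := diagcase _ hE hJE (or_intror erefl).
  have [ja jd] : J a /\ J (d - 1) by move: hJ; rewrite subM => /jacM_iff; rewrite ?subr0.
  have ud : is_unit (a - d).
    rewrite -[a - d]opprK; apply: unitN; apply: (unit1J Hloc) => //.
    by apply: (jacE _ (jacB jd ja)); zmod.
  have [c [hc1 hc2]] := ud.
  set t := d - a + S2; set v := (t * d - a * t) * c.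
  have cgv : cg v (-1).
    have ct : cg t 1.
      apply: (jacE _ (jacD (jacB jd ja) JS2)); rewrite /t; zmod.
    have cc : cg c (-1).
      have h := cgM (cg_refl c) (_ : cg (a - d) (-1)).
      apply: cg_sym; apply: (cg_trans (cgE (_ : -1 = - (c * (a - d))))).
        by rewrite hc2.
      apply: (cg_trans (cgN (h _))); last by apply: cgE; rewrite mulrN1 opprK.
      by apply: (jacE _ (jacB ja jd)); zmod.
    apply: (cg_trans (cgM (cgB (cgM ct (cg_refl d)) (cgM (cg_refl a) ct)) cc)).
    rewrite mul1r mulr1 mulrN1.
    apply: (cg_trans (cgN (cgB jd (cg_refl a)))).
    by apply: (jacE _ ja); zmod.
  have [v' [hv1 hv2]] : is_unit v.
    rewrite -[v]opprK; apply: unitN; apply: (unit1J Hloc).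
    by apply: (jacE _ (jacN cgv)); zmod.
  have [hs r1 r2] := fromD hc2 hc1 hv1 hv2.
  apply: Or44; exists (a - v), v, v', (a - S2); split.
  - split; last split => //.
      by apply: (jacE _ (jacB ja cgv)); zmod.
    by apply: (jacE _ (jacB ja JS2)); zmod.
  - apply: (sim_trans _ hs); exists Q, P; split => //; split => //; by rewrite hD.
  - by exists a; split => //; move: r1; rewrite /rr1 addrC.
  - by exists d; split => //; move: r2; rewrite /rr2 addrC.
-
  have hE : (mx2 s 1 0 0 0 : M) * mx2 s 1 0 0 0 = mx2 s 1 0 0 0 by rewrite mulM; msimp.
  have hJE : jacobson (e - mx2 s 1 0 0 0).
    by apply: jacM_of; rewrite {1}(etaM e) subM ?e11M ?e22M ?subr0.
  have [a [d [P [Q [h1 h2 hD hJ]]]]] := diagcase _ hE hJE (or_introl erefl).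
  have [ja jd] : J (a - 1) /\ J d by move: hJ; rewrite subM => /jacM_iff; rewrite ?subr0.
  have ud : is_unit (a - d).
    apply: (unit1J Hloc) => //; by apply: (jacE _ (jacB ja jd)); zmod.
  have [c [hc1 hc2]] := ud.
  set t := d - a + S2; set v := (t * d - a * t) * c.
  have cgv : cg v 1.
    have ct : cg t (-1).
      apply: (jacE _ (jacD (jacB jd ja) JS2)); rewrite /t; zmod.
    have cc : cg c 1.
      have h := cgM (cg_refl c) (_ : cg (a - d) 1).
      apply: cg_sym; apply: (cg_trans (cgE (esym hc2))).
      apply: (cg_trans (h _)); last by apply: cgE; rewrite mulr1.
      by apply: (jacE _ (jacB ja jd)); zmod.
    apply: (cg_trans (cgM (cgB (cgM ct (cg_refl d)) (cgM (cg_refl a) ct)) cc)).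
    rewrite mulr1 mulN1r mulrN1.
    by apply: (jacE _ (jacB ja jd)); zmod.
  have [v' [hv1 hv2]] : is_unit v by apply: (unit1J Hloc).
  have [hs r1 r2] := fromD hc2 hc1 hv1 hv2.
  apply: Or43; exists (a - S2), v, v', (a - v); split.
  - split; last split => //.
      by apply: (jacE _ (jacB ja JS2)); zmod.
    by apply: (jacE _ (jacB ja cgv)); zmod.
  - apply: (sim_trans _ hs); exists Q, P; split => //; split => //; by rewrite hD.
  - by exists a.
  - by exists d.
- apply: Or42; apply: (jacE _ (jacB (_ : jacobson (1 - e)) hj)); first by zmod.
  apply: jacM_of; rewrite {1}(etaM e) oneM subM ?e11M ?e22M.
  + by apply: (jacE _ (jacN j11)); zmod.
  + by apply: (jacE _ (jacN j22)); zmod.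
Qed.

Lemma main_bwd (A : M) :
  [\/ jacobson A,
      jacobson (1 - A),
      (exists (u v v' w : R),
          [/\ J (u - 1) /\ (v * v' = 1 /\ v' * v = 1) /\ J w,
              similar_elt A (mx2 s u 1 v w),
              (exists t : R, J (t - 1) /\
                 right_root (v * u * v' + w) (v * u * v' * w - cval s ^+ 2 * v) t)
            & (exists t : R, J t /\
                 right_root (u + w) (w * u - cval s ^+ 2 * v) t)])
    | (exists (u v v' w : R),
          [/\ J (u - 1) /\ (v * v' = 1 /\ v' * v = 1) /\ J w,
              similar_elt A (mx2 s w 1 v u),
              (exists t : R, J t /\
                 right_root (u + v * w * v') (v * w * v' * u - cval s ^+ 2 * v) t)
            & (exists t : R, J (t - 1) /\
                 right_root (u + w) (u * w - cval s ^+ 2 * v) t)])] ->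
  strongly_J_clean A.
Proof.
case=> [hA|hA|[u [v [v' [w [[ju [[hv1 hv2] jw]] hsim [t1 [jt1 r1]] [t2 [jt2 r2]]]]]]]
           |[u [v [v' [w [[ju [[hv1 hv2] jw]] hsim [t1 [jt1 r1]] [t2 [jt2 r2]]]]]]]].
- exists 0; split; first by rewrite mulr0.
  by split; [rewrite mulr0 mul0r | rewrite subr0].
- exists 1; split; first by rewrite mulr1.
  split; first by rewrite mulr1 mul1r.
  by apply: (jacE _ (jacN hA)); zmod.
- have hD : similar_elt (mx2 s u 1 v w : M) (mx2 s t1 0 0 t2).
    apply: (@toD u w v v' t1 t2) => //.
    + apply: (unit1J Hloc); by apply: (jacE _ (jacB jt1 jw)); zmod.
    + rewrite -[t2 - u]opprK; apply: unitN; apply: (unit1J Hloc).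
      by apply: (jacE _ (jacB ju jt2)); zmod.
  exact: (sJc_sim (sim_trans hsim hD) (sJc_D1 jt1 jt2)).
- have hD : similar_elt (mx2 s w 1 v u : M) (mx2 s t1 0 0 t2).
    apply: (@toD w u v v' t1 t2) => //.
    + rewrite -[t1 - u]opprK; apply: unitN; apply: (unit1J Hloc).
      by apply: (jacE _ (jacB ju jt1)); zmod.
    + apply: (unit1J Hloc); by apply: (jacE _ (jacB jt2 jw)); zmod.
    + by rewrite /rr1 addrC.
    + by rewrite /rr2 addrC.
  exact: (sJc_sim (sim_trans hsim hD) (sJc_D2 jt1 jt2)).
Qed.

End M2.

Theorem theorem2p16 (R : nzRingType) (s : cent R)
  (Hloc : local_ring R) (HsJ : jacobson (cval s)) (A : M2s s) :
  strongly_J_clean A <->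
  [\/ jacobson A,
      jacobson (1 - A),
      (exists (u v v' w : R),
          [/\ jacobson (u - 1) /\ (v * v' = 1 /\ v' * v = 1) /\ jacobson w,
              similar_elt A (mx2 s u 1 v w),
              (exists t : R, jacobson (t - 1) /\
                 right_root (v * u * v' + w) (v * u * v' * w - cval s ^+ 2 * v) t)
            & (exists t : R, jacobson t /\
                 right_root (u + w) (w * u - cval s ^+ 2 * v) t)])
    | (exists (u v v' w : R),
          [/\ jacobson (u - 1) /\ (v * v' = 1 /\ v' * v = 1) /\ jacobson w,
              similar_elt A (mx2 s w 1 v u),
              (exists t : R, jacobson t /\
                 right_root (u + v * w * v') (v * w * v' * u - cval s ^+ 2 * v) t)
            & (exists t : R, jacobson (t - 1) /\
                 right_root (u + w) (u * w - cval s ^+ 2 * v) t)])].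
Proof.
split; [exact: main_fwd | exact: main_bwd].
Qed.
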